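(* Let $p$ be a prime, $k \geq 1$ an integer, $N = p^{2k+1}$, and let $d$ be odd. In the coefficient-choosing game of degree $d$ over $\mathbb{Z}/N\mathbb{Z}$, Wanda has a winning strategy (whether she moves first or second).
   Context: The coefficient-choosing game of degree $d$ over a finite ring $R = \mathbb{Z}/N\mathbb{Z}$: Nora and Wanda alternately choose coefficients of $f(x) = a_d x^d + \cdots + a_0$; on each move the current player picks a not-yet-chosen coefficient and assigns it a value in $R$, subject to $a_d \neq 0$, $a_0 \neq 0$. After all $d+1$ coefficients are chosen, Wanda wins if $f$ has a root in $R$, and Nora wins otherwise. *)

(* Defs.v *)
From mathcomp Require Import all_boot all_algebra.
Set Implicit Arguments. Unset Strict Implicit. Unset Printing Implicit Defensive.
Import GRing.Theory.
Local Open Scope ring_scope.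

(* A position is a partial assignment of the d+1 coefficients a_0..a_d
   (index i : 'I_d.+1 is the coefficient of x^i; None = not yet chosen). *)

Definition legal_move (R : nzRingType) (d : nat)
    (pos : {ffun 'I_d.+1 -> option R}) (i : 'I_d.+1) (v : R) : Prop :=
  [/\ pos i = None,
      (i = ord0 -> v != 0) &
      (i = ord_max -> v != 0)].

Definition play_move (R : nzRingType) (d : nat)
    (pos : {ffun 'I_d.+1 -> option R}) (i : 'I_d.+1) (v : R)
    : {ffun 'I_d.+1 -> option R} :=
  [ffun j => if j == i then Some v else pos j].

Definition pos_poly (R : nzRingType) (d : nat)
    (pos : {ffun 'I_d.+1 -> option R}) : {poly R} :=
  \poly_(i < d.+1) odflt 0 (pos (inord i)).

Fixpoint wanda_wins (R : comNzRingType) (d : nat) (n : nat) (wturn : bool)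
    (pos : {ffun 'I_d.+1 -> option R}) {struct n} : Prop :=
  match n with
  | 0 => exists x : R, root (pos_poly pos) x
  | n'.+1 =>
      if wturn then
        exists i v, legal_move pos i v /\ wanda_wins n' false (play_move pos i v)
      else
        forall i v, legal_move pos i v -> wanda_wins n' true (play_move pos i v)
  end.

Definition wanda_has_winning_strategy (R : comNzRingType) (d : nat)
    (wanda_first : bool) : Prop :=
  @wanda_wins R d d.+1 wanda_first [ffun _ => None].

(* Main.v *)
Require Import Defs.
From mathcomp Require Import all_boot all_algebra.
From mathcomp Require Import ring lra zify.
Set Implicit Arguments. Unset Strict Implicit. Unset Printing Implicit Defensive.
Import GRing.Theory.

Section Game.
Local Open Scope ring_scope.
Variables (R : comNzRingType) (d : nat).
Notation pos_t := {ffun 'I_d.+1 -> option R}.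

Definition cnt (pos : pos_t) := #|[set j | pos j == None]|.

Lemma cnt_play (pos : pos_t) i v : pos i = None ->
  cnt (play_move pos i v) = (cnt pos).-1.
Proof.
move=> Hi; rewrite /cnt (cardsD1 i [set j | pos j == None]) inE Hi eqxx /=.
apply: eq_card => j; rewrite !inE ffunE.
by case: (j == i).
Qed.

Lemma cnt0 (pos : pos_t) : cnt pos = 0%N -> forall j, pos j <> None.
Proof.
move=> H j Hj; have := card0_eq H j; rewrite !inE Hj; by [].
Qed.

Lemma cnt_ex (pos : pos_t) n : cnt pos = n.+1 -> exists j, pos j = None.
Proof.
move=> H; have : (0 < cnt pos)%N by rewrite H.
rewrite /cnt card_gt0 => /set0Pn [j]; rewrite inE => /eqP; by exists j.
Qed.

Lemma play_other (pos : pos_t) i v j : j != i -> play_move pos i v j = pos j.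
Proof. by move=> H; rewrite ffunE (negbTE H). Qed.

Lemma play_same (pos : pos_t) i v : play_move pos i v i = Some v.
Proof. by rewrite ffunE eqxx. Qed.

Lemma strat (I : nat -> bool -> pos_t -> Prop) :
 (forall pos b, I 0%N b pos -> exists x, root (pos_poly pos) x) ->
 (forall n pos, I n.+1 true pos -> exists i v, legal_move pos i v /\ I n false (play_move pos i v)) ->
 (forall n pos, I n.+1 false pos -> forall i v, legal_move pos i v -> I n true (play_move pos i v)) ->
 forall n b pos, I n b pos -> wanda_wins n b pos.
Proof.
move=> H0 HW HN; elim=> [|n IH] b pos /=; first exact: H0.
case: b => H.
  by have [i [v [Hl HI]]] := HW _ _ H; exists i, v; split => //; apply: IH.
by move=> i v Hl; apply: IH; apply: HN.
Qed.

Lemma pos_poly_horner (pos : pos_t) x :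
  (pos_poly pos).[x] = \sum_(i < d.+1) odflt 0 (pos i) * x ^+ i.
Proof.
rewrite /pos_poly horner_poly; apply: eq_bigr => i _; by rewrite inord_val.
Qed.

Lemma sum_trunc (F : nat -> R) x m n : (m <= n)%N -> x ^+ m = 0 ->
  \sum_(i < n) F i * x ^+ i = \sum_(i < m) F i * x ^+ i.
Proof.
move=> Hmn Hx.
rewrite -!(big_mkord xpredT (fun i => F i * x ^+ i)) (big_cat_nat (leq0n m) Hmn) /=.
rewrite [X in _ + X]big_nat_cond [X in _ + X]big1 ?addr0 // => i /andP[/andP[Hi _] _].
by rewrite -(subnKC Hi) exprD Hx mul0r mulr0.
Qed.

End Game.


Section Zp.
Local Open Scope ring_scope.
Variables (p k : nat) (Hp : prime p) (Hk : (0 < k)%N).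
Notation N := (p ^ (2 * k + 1))%N.
Notation R := 'Z_(p ^ (2 * k + 1)).

Lemma N_gt1 : (1 < N)%N.
Proof. by rewrite -[1%N](expn0 p) ltn_exp2l ?prime_gt1 // addn1. Qed.

Lemma natZ0 n : ((n%:R : R) == 0) = (N %| n)%N.
Proof.
rewrite Zp_nat -val_eqE /= Zp_cast ?N_gt1 //.
Qed.

Lemma N0 : (N%:R : R) = 0.
Proof. by apply/eqP; rewrite natZ0. Qed.

Lemma P0 m : (2 * k + 1 <= m)%N -> ((p%:R : R) ^+ m) = 0.
Proof.
move=> H; rewrite -(subnKC H) exprD -natrX N0 mul0r //.
Qed.

Lemma p2k_neq0 : ((p%:R : R) ^+ (2 * k)) != 0.
Proof.
rewrite -natrX natZ0; apply/negP => /dvdn_leq.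
rewrite expn_gt0 prime_gt0 // => /(_ isT).
by rewrite leq_exp2l ?prime_gt1 // addn1 ltnn.
Qed.

Lemma six_neq0 : (6%:R : R) != 0.
Proof.
rewrite natZ0; apply/negP => /(dvdn_leq (isT : (0 < 6)%N)).
have : (2 ^ 3 <= N)%N.
  apply: (@leq_trans (p ^ 3)).
    by rewrite leq_exp2r // prime_gt1.
  by rewrite leq_exp2l ?prime_gt1 //; lia.
by rewrite expnS; lia.
Qed.

End Zp.


Section Zp2.
Local Open Scope ring_scope.
Variables (p k : nat) (Hp : prime p) (Hk : (0 < k)%N).
Notation N := (p ^ (2 * k + 1))%N.
Notation R := 'Z_(p ^ (2 * k + 1)).
Notation P := (p%:R : R).

Definition wfun (v : R) : R := - 1 - ((val v %/ p ^ k)%N)%:R.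

Lemma eval_small d (pos : {ffun 'I_d.+1 -> option R}) x m : (m <= d.+1)%N -> x ^+ m = 0 ->
  (pos_poly pos).[x] = \sum_(i < m) odflt 0 (pos (inord i)) * x ^+ i.
Proof. by move=> Hm Hx; rewrite /pos_poly horner_poly (sum_trunc (fun i => odflt 0 (pos (inord i))) Hm Hx). Qed.

Lemma valR (v : R) : v = (val v)%:R.
Proof. by rewrite natr_Zp. Qed.

Lemma W_root d (pos : {ffun 'I_d.+1 -> option R}) : (2 <= d)%N ->
  pos (inord 0) = Some (P ^+ (2 * k)) ->
  (pos (inord 1) = Some 1 \/ exists v, pos (inord 1) = Some v /\ pos (inord 2) = Some (wfun v)) ->
  exists x, root (pos_poly pos) x.
Proof.
move=> Hd H0 [H1|[v [H1 H2]]].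
  exists (- P ^+ (2 * k)); rewrite rootE (@eval_small d pos _ 2); last 2 first.
  - by apply: leq_trans Hd _.
  - by rewrite sqrrN -exprM (P0 Hp) //; lia.
  rewrite !big_ord_recl big_ord0 /= H0 H1 /=.
  by rewrite /bump /= expr0 expr1 mulr1 mul1r addr0 subrr.
have Hd3 : (3 <= d.+1)%N by [].
have Hd2 : (2 <= d.+1)%N by apply: leq_trans Hd _.
have Hv := valR v.
have [/divnK Hq | Hnd] := boolP (p ^ k %| val v)%N.
  exists (P ^+ k); rewrite rootE (@eval_small d pos _ 3) //; last first.
    by rewrite -exprM (P0 Hp) //; lia.
  rewrite !big_ord_recl big_ord0 /= H0 H1 H2 /= /bump /=.
  set q := (val v %/ p ^ k)%N.
  have Ev : v = q%:R * P ^+ k by rewrite Hv -Hq natrM natrX.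
  rewrite /wfun -/q Ev (mulnC 2 k) exprM.
  apply/eqP; ring.
have Hpk : (0 < p ^ k)%N by rewrite expn_gt0 prime_gt0.
have [a _ /dvdnP [t Ht]] := Bezoutl (val v) Hpk.
have /(dvdn_pfactor _ _ Hp) [j Hjk Hg] := dvdn_gcdl (p ^ k) (val v).
have Hjk' : (j < k)%N.
  rewrite ltn_neqAle Hjk andbT; apply/negP => /eqP Ej.
  by have := dvdn_gcdr (p ^ k) (val v); rewrite Hg Ej (negbTE Hnd).
set h := (p ^ (k - 1 - j))%N.
exists ((a * h * p ^ (k + 1))%N%:R); rewrite rootE (@eval_small d pos _ 2) ?Hd2 //; last first.
  by rewrite natrM natrX exprMn -exprM (P0 Hp) ?mulr0 //; lia.
rewrite !big_ord_recl big_ord0 /= H0 H1 /= /bump /= expr0 expr1 mulr1 addr0.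
rewrite Hv -natrX -natrM -natrD (natZ0 k Hp).
have key : (p ^ (2 * k) + val v * (a * h * p ^ (k + 1)) = p ^ (2 * k + 1) * (h * t))%N.
  move: Ht Hg; generalize (val v) => vv Ht Hg.
  have E1 : (p ^ (2 * k) = p ^ (k + 1) * p ^ j * h)%N.
    by rewrite /h -!expnD; congr (expn p); lia.
  have E2 : (p ^ (2 * k + 1) = p ^ (k + 1) * p ^ k)%N.
    by rewrite -expnD; congr (expn p); lia.
  rewrite E1 E2 -Hg.
  have -> : (p ^ (k + 1) * gcdn (p ^ k) vv * h + vv * (a * h * p ^ (k + 1))
     = p ^ (k + 1) * h * (gcdn (p ^ k) vv + a * vv))%N by ring.
  rewrite Ht; ring.
by rewrite key dvdn_mulr.
Qed.
End Zp2.


Section Gen.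
Local Open Scope ring_scope.
Variables (R : comNzRingType) (d : nat).
Notation pos_t := {ffun 'I_d.+1 -> option R}.

Lemma inord0E : (inord 0 : 'I_d.+1) = ord0.
Proof. by apply: val_inj; rewrite /= inordK. Qed.

Lemma inordmaxE : (inord d : 'I_d.+1) = ord_max.
Proof. by apply: val_inj; rewrite /= inordK. Qed.

Lemma inord_eq a b : (a < d.+1)%N -> (b < d.+1)%N ->
  ((inord a : 'I_d.+1) == inord b) = (a == b).
Proof. by move=> Ha Hb; rewrite -val_eqE /= !inordK. Qed.

Lemma play_some (pos : pos_t) i v l u : pos i = None -> pos l = Some u ->
  play_move pos i v l = Some u.
Proof.
move=> Hi Hl; rewrite play_other //; apply/eqP => E; by rewrite E Hi in Hl.
Qed.

Lemma play_none (pos : pos_t) i v l : play_move pos i v l = None -> l != i /\ pos l = None.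
Proof.
rewrite ffunE; case: eqP => // _ H; by split.
Qed.

Lemma play_eval (pos : pos_t) j v x : pos j = None ->
  (pos_poly (play_move pos j v)).[x] = v * x ^+ j + (pos_poly pos).[x].
Proof.
move=> Hj; rewrite !pos_poly_horner (bigD1 j) //= [in RHS](bigD1 j) //=.
rewrite play_same Hj /= mul0r add0r; congr (_ + _).
by apply: eq_bigr => l Hl; rewrite play_other.
Qed.

Lemma empty_eval x : (pos_poly ([ffun _ => None] : pos_t)).[x] = 0.
Proof.
by rewrite pos_poly_horner big1 // => i _; rewrite ffunE mul0r.
Qed.

Lemma cnt_empty : cnt ([ffun _ => None] : pos_t) = d.+1.
Proof.
rewrite /cnt -[RHS](card_ord d.+1) -cardsT; apply: eq_card => j.
by rewrite !inE ffunE.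
Qed.

End Gen.
Local Open Scope ring_scope.

Lemma cubic (R : comNzRingType) (a1 a2 : R) : (6%:R : R) != 0 ->
  exists x : R, a1 * x + a2 * x ^+ 2 + x ^+ 3 != 0.
Proof.
move=> H6.
case: (eqVneq (a1 * 1 + a2 * 1 ^+ 2 + 1 ^+ 3) 0) => [E1|]; last by exists 1.
case: (eqVneq (a1 * 2%:R + a2 * 2%:R ^+ 2 + 2%:R ^+ 3) 0) => [E2|]; last by exists 2%:R.
case: (eqVneq (a1 * 3%:R + a2 * 3%:R ^+ 2 + 3%:R ^+ 3) 0) => [E3|]; last by exists 3%:R.
exfalso; move/eqP: H6; apply.
have -> : (6%:R : R) = (a1 * 3%:R + a2 * 3%:R ^+ 2 + 3%:R ^+ 3)
   - 3%:R * (a1 * 2%:R + a2 * 2%:R ^+ 2 + 2%:R ^+ 3)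
   + 3%:R * (a1 * 1 + a2 * 1 ^+ 2 + 1 ^+ 3) by ring.
by rewrite E1 E2 E3; ring.
Qed.


Section WF.
Local Open Scope ring_scope.
Variables (p k : nat) (Hp : prime p) (Hk : (0 < k)%N).
Notation R := 'Z_(p ^ (2 * k + 1)).
Notation P := (p%:R : R).
Variables (d : nat) (Hd : (3 <= d)%N).
Notation pos_t := {ffun 'I_d.+1 -> option R}.
Let c0 := P ^+ (2 * k).
Let i0 : 'I_d.+1 := inord 0.
Let i1 : 'I_d.+1 := inord 1.
Let i2 : 'I_d.+1 := inord 2.

Definition Wp (pos : pos_t) :=
  pos i1 = Some 1 \/ exists v, pos i1 = Some v /\ pos i2 = Some (wfun v).

Definition IWF (n : nat) (b : bool) (pos : pos_t) :=
  cnt pos = n /\ pos i0 = Some c0 /\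
  (Wp pos \/ if b then (pos i1 = None \/ pos i2 = None) else (pos i1 = None /\ pos i2 = None)).

Lemma i01 : (i0 == i1) = false. Proof. by rewrite inord_eq //; lia. Qed.
Lemma i02 : (i0 == i2) = false. Proof. by rewrite inord_eq //; lia. Qed.
Lemma i12 : (i1 == i2) = false. Proof. by rewrite inord_eq //; lia. Qed.

Lemma Wp_play (pos : pos_t) i v : pos i = None -> Wp pos -> Wp (play_move pos i v).
Proof.
move=> Hi [H|[u [H1 H2]]]; [left|right]; first exact: play_some.
by exists u; split; apply: play_some.
Qed.

Lemma c0_neq0 : c0 != 0. Proof. exact: p2k_neq0. Qed.

Lemma IWF_win n b (pos : pos_t) : IWF n b pos -> wanda_wins n b pos.
Proof.
apply: strat.
- move=> pos' b' [Hc [H0 [HW|Hb]]].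
    apply: (W_root Hp Hk (leq_trans _ Hd) H0) => //.
  exfalso; have H := cnt0 Hc.
  by case: b' Hb => [[]|[]] E; move: (H _ E).
- move=> n' pos' [Hc [H0 Hr]].
  have Hi0 : forall j, pos' j = None -> j != i0.
    by move=> j Hj; apply/eqP => E; rewrite E H0 in Hj.
  have Hpre : forall j v, pos' j = None -> legal_move pos' j (if j == i2 then v else 1) ->
     cnt (play_move pos' j (if j == i2 then v else 1)) = n' /\
     play_move pos' j (if j == i2 then v else 1) i0 = Some c0.
    move=> j v Hj _; split; first by rewrite cnt_play ?Hc.
    exact: play_some.
  have leg1 : forall j, pos' j = None -> legal_move pos' j 1.
    by move=> j Hj; split => // _; exact: oner_neq0.
  case: Hr => [HW|Hb].
    have [j Hj] := cnt_ex Hc.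
    exists j, 1; split; first exact: leg1.
    split; first by rewrite cnt_play ?Hc.
    split; first exact: play_some.
    by left; apply: Wp_play.
  case E1: (pos' i1) => [u|]; case E2: (pos' i2) => [u'|].
  + by exfalso; case: Hb; rewrite ?E1 ?E2.
  + exists i2, (wfun u); split.
      split => // E; exfalso; move: E => /(congr1 val); rewrite /= inordK //; lia.
    split; first by rewrite cnt_play ?Hc.
    split; first exact: play_some.
    left; right; exists u; split; last exact: play_same.
    exact: play_some.
  + exists i1, 1; split; first exact: leg1.
    split; first by rewrite cnt_play ?Hc.
    split; first exact: play_some.
    by left; left; exact: play_same.
  + case: (boolP [exists j, [&& pos' j == None, j != i1 & j != i2]]).
      move=> /existsP [j /and3P [/eqP Hj Hj1 Hj2]].
      exists j, 1; split; first exact: leg1.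
      split; first by rewrite cnt_play ?Hc.
      split; first exact: play_some.
      by right; split; rewrite play_other // eq_sym.
    move=> _; exists i1, 1; split; first exact: leg1.
    split; first by rewrite cnt_play ?Hc.
    split; first exact: play_some.
    by left; left; exact: play_same.
- move=> n' pos' [Hc [H0 Hr]] i v [Hi _ _].
  split; first by rewrite cnt_play ?Hc.
  split; first exact: play_some.
  case: Hr => [HW|[H1 H2]]; first by left; apply: Wp_play.
  right; case: (eqVneq i i1) => [->|Hne].
    by right; rewrite play_other // eq_sym i12.
  by left; rewrite play_other // eq_sym.
Qed.

Lemma wanda_first_win : wanda_wins d.+1 true ([ffun _ => None] : pos_t).
Proof.
exists i0, c0; split.
  split; first by rewrite ffunE.
    by move=> _; exact: c0_neq0.
  by move=> _; exact: c0_neq0.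
apply: IWF_win; split; first by rewrite cnt_play ?cnt_empty // ffunE.
split; first exact: play_same.
right; split; rewrite play_other ?ffunE // eq_sym ?i01 ?i02 //.
Qed.

End WF.

Local Open Scope ring_scope.

Lemma wanda_first_d1 (R : comNzRingType) :
  wanda_wins 2 true ([ffun _ => None] : {ffun 'I_2 -> option R}).
Proof.
exists ord_max, 1; split.
  by split; [rewrite ffunE | move=> _; exact: oner_neq0 | move=> _; exact: oner_neq0].
move=> i v [Hi _ _]; exists (- v).
have Hne : i != ord_max.
  by apply/eqP => E; move: Hi; rewrite E play_same.
have -> : i = ord0.
  apply: val_inj => /=; move: Hne (ltn_ord i); rewrite -val_eqE /=; lia.
rewrite rootE (@play_eval R 1 _ ord0 v (-v)); last by rewrite !ffunE.
rewrite (@play_eval R 1 _ ord_max 1 (-v)) ?ffunE // empty_eval /=.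
by rewrite expr0 expr1 mulr1 mul1r addr0 addrN.
Qed.

Lemma sum4 (R : comNzRingType) (F : nat -> R) x n : n = 4%N ->
  \sum_(i < n) F i * x ^+ i = F 0%N * x ^+ 0 + F 1%N * x + F 2%N * x ^+ 2 + F 3%N * x ^+ 3.
Proof.
move=> ->; rewrite !big_ord_recl big_ord0 /= /bump /=.
by rewrite expr1 addr0 !addrA.
Qed.

Section NF.
Variables (R : comNzRingType) (d : nat) (Hd : odd d).
Hypothesis H6 : d = 3%N -> (6%:R : R) != 0.
Notation pos_t := {ffun 'I_d.+1 -> option R}.

Definition Safe (pos : pos_t) := forall j, pos j = None ->
  (j != ord0 /\ j != ord_max) \/ (pos_poly pos).[1] != 0 \/
  (j = ord0 /\ d = 3%N /\ pos ord_max = Some 1).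

Definition INF (n : nat) (b : bool) (pos : pos_t) :=
  if n == 0%N then exists x, root (pos_poly pos) x
  else cnt pos = n /\
      if b then [/\ odd n, n = 1%N -> Safe pos &
                 (3 <= n)%N -> pos ord_max = None -> pos ord0 = None -> d = 3%N \/ (5 <= n)%N]
      else [/\ ~~ odd n, pos ord_max != None &
                 pos ord0 = None -> (4 <= n)%N \/ (pos ord_max = Some 1 /\ d = 3%N)].

Lemma ord0_max : (ord0 : 'I_d.+1) != ord_max.
Proof. rewrite -val_eqE /=; case: d Hd => //. Qed.

Lemma safe_move (pos : pos_t) : Safe pos -> cnt pos = 1%N ->
  exists i v, legal_move pos i v /\ exists x, root (pos_poly (play_move pos i v)) x.
Proof.
move=> HS Hc; have [j Hj] := cnt_ex Hc.
case: (HS j Hj) => [[Hj0 Hjm]|[Hs|[Ej [E3 Hm]]]].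
- exists j, (- (pos_poly pos).[1]); split.
    by split => // E; [move: Hj0 | move: Hjm]; rewrite E eqxx.
  by exists 1; rewrite rootE play_eval // expr1n mulr1 addNr.
- exists j, (- (pos_poly pos).[1]); split.
    by split => // _; rewrite oppr_eq0.
  by exists 1; rewrite rootE play_eval // expr1n mulr1 addNr.
- subst j.
  have [x Hx] := cubic (odflt 0 (pos (inord 1))) (odflt 0 (pos (inord 2))) (H6 E3).
  have Ev : (pos_poly pos).[x] = odflt 0 (pos (inord 1)) * x + odflt 0 (pos (inord 2)) * x ^+ 2 + x ^+ 3.
    have F3 : (inord 3 : 'I_d.+1) = ord_max by apply: val_inj; rewrite /= inordK ?E3.
    rewrite /pos_poly horner_poly (sum4 (fun i => odflt 0 (pos (inord i))) x (congr1 S E3)) /=.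
    by rewrite inord0E Hj F3 Hm /= mul0r add0r mul1r.
  exists ord0, (- (pos_poly pos).[x]); split.
    by split => // _; rewrite oppr_eq0 Ev.
  by exists x; rewrite rootE play_eval // expr0 mulr1 addNr.
Qed.

Lemma INF_win n b (pos : pos_t) : INF n b pos -> wanda_wins n b pos.
Proof.
move: n b pos; apply: strat.
- by move=> pos' b'.
- move=> n pos [Hc [Hodd Hsafe Hext]].
  case: n Hc Hodd Hsafe Hext => [|n] Hc Hodd Hsafe Hext.
    exact: safe_move (Hsafe erefl) Hc.
  have Hn1 : (1 <= n)%N by move: Hodd => /=; case: n {Hc Hsafe Hext}.
  have Hev : ~~ odd n.+1 by move: Hodd => /=; case: (odd n).
  have leg1 : forall j, pos j = None -> legal_move pos j 1.
    by move=> j Hj; split => // _; exact: oner_neq0.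
  case Em: (pos ord_max) => [um|].
    case E0: (pos ord0) => [u0|].
      have [j Hj] := cnt_ex Hc.
      exists j, 1; split; first exact: leg1.
      split; first by rewrite cnt_play ?Hc.
      split => //; first by rewrite (play_some 1 Hj Em).
      by rewrite (play_some 1 Hj E0).
    exists ord0, 1; split; first exact: leg1.
    split; first by rewrite cnt_play ?Hc.
    split => //; first by rewrite (play_some 1 E0 Em).
    by rewrite play_same.
  exists ord_max, 1; split; first exact: leg1.
  split; first by rewrite cnt_play ?Hc.
  split => //; first by rewrite play_same.
  move=> /play_none [_ H0].
  have H3 : (2 < n.+2)%N by lia.
  have [E3|E5] := Hext H3 Em H0.
    by right; rewrite play_same E3.
  by left.
- move=> n pos [Hc [Hev Hm H0]] i v [Hi _ _].
  case: n Hc Hev H0 => [|n] Hc Hev H0; first by [].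
  split; first by rewrite cnt_play ?Hc.
  split.
  + by rewrite /= negbK in Hev.
  + move=> En j /play_none [Hji Hj].
    have Hjm : j != ord_max by apply/eqP => E; move: Hm; rewrite -E Hj.
    case: (eqVneq j ord0) => [Ej|Hj0].
      subst j; case: (H0 Hj) => [|[E1 E3]]; first by rewrite En.
      right; right; split => //; split => //.
      case Em: (pos ord_max) Hm => [um|] // _.
      by rewrite (play_some v Hi Em) -E1 Em.
    by left.
  + move=> _ /play_none [_ Hm']; by move: Hm; rewrite Hm'.
Qed.

Lemma nora_first_win : wanda_wins d.+1 false ([ffun _ => None] : pos_t).
Proof.
move=> i v Hl; apply: INF_win.
have Hd0 : d != 0%N by apply/eqP => E; move: Hd; rewrite E.
rewrite /INF (negbTE Hd0).
split; first by rewrite cnt_play ?cnt_empty ?ffunE.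
split => //.
- move=> E1 j /play_none [Hji Hj].
  right; left; rewrite play_eval ?ffunE // empty_eval addr0 expr1n mulr1.
  case: Hl => _ Hl0 Hlm; apply/eqP => Ev.
  have Hi2 := ltn_ord i.
  have : (nat_of_ord i = 0 \/ nat_of_ord i = d)%N by lia.
  case => Ei.
    by move: (Hl0 (val_inj (Ei : val i = val (ord0 : 'I_d.+1)))); rewrite Ev eqxx.
  by move: (Hlm (val_inj (Ei : val i = val (ord_max : 'I_d.+1)))); rewrite Ev eqxx.
- move=> H3 _ _.
  have : (d = 3 \/ d = 4 \/ 5 <= d)%N by lia.
  case => [->|[E4|]]; [by left | | by right].
  by move: Hd; rewrite E4.
Qed.

End NF.


Local Close Scope ring_scope.

Theorem lemma6 (p k d : nat) :
  prime p -> (1 <= k)%N -> odd d ->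
  forall wanda_first : bool,
    wanda_has_winning_strategy 'Z_(p ^ (2 * k + 1)) d wanda_first.
Proof.
move=> Hp Hk Hd [].
  rewrite /wanda_has_winning_strategy.
  have [E1|H3] : (d = 1 \/ 3 <= d)%N.
    move: Hd; clear; case: d => [|[|[|d']]] //= _; by [left | right].
    by subst d; exact: wanda_first_d1.
  exact: (wanda_first_win Hp Hk H3).
apply: nora_first_win => // _.
exact: (six_neq0 (k:=k) Hp).
Qed.
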